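(* Let $\beta\ge0$ and $h\in\mathbb R$ with $\textsc{f}(\beta,h)>0$. Then for every $\gamma\in(0,\textsc{f}(\beta,h)]$ there exists a $\mathbb P$-a.s. finite random variable $N_0(\gamma,\omega)$ such that for all $N\ge N_0(\gamma,\omega)$, \[ \mathbf P_{N,\omega,\beta,h}\big(\eta_{1,N}>\gamma N\big)\le\exp\big(-\gamma N\,\textsc{f}(\beta,h)/2\big). \]
   Context: Let $\tau=(\tau_j)_{j\ge0}$ be a renewal process with $\tau_0=0$ and i.i.d. increments $\eta_j=\tau_j-\tau_{j-1}$ with values in $\mathbb N$, law $\mathbf P$; $K(n)=\mathbf P(\eta_1=n)>0$ for all $n$, $K(n)\sim C_Kn^{-(1+\alpha)}$, $\alpha>0$, $C_K>0$. Identify $\tau$ with the set $\{\tau_0,\tau_1,\dots\}$, $\delta_n=\mathbf 1_{n\in\tau}$. Let $\omega=(\omega_n)_{n\ge1}$ be i.i.d. with law $\mathbb P$, independent of $\tau$, $\lambda(s)=\log\mathbb E e^{s\omega_1}<\infty$ for all $s$, $\mathbb E\omega_1=0$, $\mathbb E\omega_1^2=1$. Disordered pinning model: $Z_{N,\omega,\beta,h}=\mathbf E[\exp(\sum_{j=1}^N(\beta\omega_j+h)\delta_j)\delta_N]$, $\mathbf P_{N,\omega,\beta,h}$ the probability on subsets of $\{0,\dots,N\}$ with $\mathbf P_{N,\omega,\beta,h}(\{A\})=\mathbf E[\exp(\sum_{j=1}^N(\beta\omega_j+h)\delta_j)\mathbf 1_{\tau\cap[0,N]=A}\delta_N]/Z_{N,\omega,\beta,h}$,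 and $\textsc{f}(\beta,h)=\lim_N\frac1N\log Z_{N,\omega,\beta,h}$ ($\mathbb P$-a.s., deterministic). Under $\mathbf P_{N,\omega,\beta,h}$, $N\in\tau$, and $\eta_{1,N}:=\max\{\eta_j: 1\le j\le|\tau\cap(0,N]|\}$ is the largest inter-arrival up to $N$. *)

(* Defs.v *)
From HB Require Import structures.
From mathcomp Require Import all_boot all_order all_algebra.
From mathcomp Require Import all_classical all_reals all_analysis.

Set Implicit Arguments.
Unset Strict Implicit.
Unset Printing Implicit Defensive.

Import Order.TTheory GRing.Theory Num.Theory.
Local Open Scope ring_scope.

(* A subset A of {0,...,N} is encoded as A : {set 'I_N.+1}.
   prev_pt A j = the largest element of A strictly below j (0 if none). *)
Definition prev_pt (N : nat) (A : {set 'I_N.+1}) (j : nat) : nat :=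
  (\max_(i in A | (i < j)%N) (i : nat))%N.

Definition max_gap (N : nat) (A : {set 'I_N.+1}) : nat :=
  (\max_(j in A | (0 < j)%N) ((j : nat) - prev_pt A j))%N.

(* Unnormalised pinning weight of the configuration tau \cap [0,N] = A
   (with N in tau):
     E[ exp(sum_{j=1}^N (beta om_j + h) delta_j) 1_{tau cap [0,N] = A} delta_N ]
   = 1_{0 in A, N in A} * prod_{j in A, j>=1} K(j - prev_pt A j) e^{beta om_j + h},
   since for a renewal process with tau_0 = 0 and increment law K,
   P(tau cap [0,N] = {0=t_0<...<t_k=N}) = prod_i K(t_i - t_{i-1}). *)
Definition pin_weight (R : realType) (K : nat -> R) (beta h : R)
  (om : nat -> R) (N : nat) (A : {set 'I_N.+1}) : R :=
  if (ord0 \in A) && (ord_max \in A) then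
    \prod_(j in A | (0 < j)%N) (K ((j : nat) - prev_pt A j)%N * expR (beta * om j + h))
  else 0.

Definition pin_Z (R : realType) (K : nat -> R) (beta h : R) (om : nat -> R)
  (N : nat) : R :=
  \sum_(A : {set 'I_N.+1}) @pin_weight R K beta h om N A.

Definition pin_prob (R : realType) (K : nat -> R) (beta h : R) (om : nat -> R)
  (N : nat) (E : pred {set 'I_N.+1}) : R :=
  (\sum_(A : {set 'I_N.+1} | E A) @pin_weight R K beta h om N A)
  / pin_Z K beta h om N.

(* Main.v *)
Require Import Defs.
From HB Require Import structures.
From mathcomp Require Import all_boot all_order all_algebra.
From mathcomp Require Import all_classical all_reals all_analysis.
From mathcomp Require Import ring lra.

Set Implicit Arguments.
Unset Strict Implicit.
Unset Printing Implicit Defensive.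
Import Order.TTheory GRing.Theory Num.Theory numFieldNormedType.Exports.
Local Open Scope classical_set_scope.
Local Open Scope ring_scope.

Definition memn n (A : {set 'I_n}) (j : nat) : bool := [exists i in A, val i == j].
Definition pv (p : pred nat) (j : nat) : nat := (\max_(0 <= i < j | p i) i)%N.
Definition MG (p : pred nat) (n : nat) : nat :=
  (\max_(0 <= j < n | p j && (0 < j)%N) (j - pv p j))%N.

Lemma memnE n (A : {set 'I_n}) (i : 'I_n) : memn A i = (i \in A).
Proof.
apply/existsP/idP => [[x /andP[xA /eqP xi]]|iA]; last by exists i; rewrite iA eqxx.
by have <- : x = i by apply: val_inj.
Qed.

Lemma memn_lt n (A : {set 'I_n}) j : memn A j -> (j < n)%N.
Proof. by rewrite /memn => /existsP[x /andP[_ /eqP <-]]; apply: ltn_ord. Qed.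

Lemma pv_eq p q j : (forall i, (i < j)%N -> p i = q i) -> pv p j = pv q j.
Proof.
move=> H; rewrite /pv big_nat_cond [RHS]big_nat_cond.
apply: eq_bigl => i; case: (ltnP i j) => ij; [by rewrite H | by rewrite !andbF].
Qed.

Lemma max_restr (p : pred nat) (F : nat -> nat) j n : (j <= n)%N ->
  (\max_(0 <= i < n | p i && (i < j)%N) F i = \max_(0 <= i < j | p i) F i)%N.
Proof.
move=> jn; rewrite (@big_cat_nat _ _ _ j) //=.
rewrite [X in maxn _ X]big_nat_cond [X in maxn _ X]big1 ?maxn0; last first.
  by move=> i /andP[/andP[ji _] /andP[_ ij]]; rewrite ltnNge ji in ij.
rewrite big_nat_cond [RHS]big_nat_cond; apply: eq_bigl => i.
by case: (ltnP i j); rewrite ?andbT ?andbF.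
Qed.

Lemma prev_ptE N (A : {set 'I_N.+1}) j : (j <= N.+1)%N ->
  prev_pt A j = pv (memn A) j.
Proof.
move=> jN; rewrite /prev_pt /pv -(max_restr (memn A) id jN) big_mkord.
by apply: eq_bigl => i; rewrite memnE.
Qed.

Lemma max_gapE N (A : {set 'I_N.+1}) : max_gap A = MG (memn A) N.+1.
Proof.
rewrite /max_gap /MG big_mkord; apply: eq_big => [i|i _]; first by rewrite memnE.
by rewrite prev_ptE // ltnW.
Qed.

Lemma pv_recr p j : pv p j.+1 = if p j then j else pv p j.
Proof.
rewrite /pv big_mkcond big_nat_recr //= -big_mkcond /=.
have le : (\max_(0 <= i < j | p i) i <= j)%N.
  rewrite big_nat_cond; apply: (big_ind (fun x => x <= j)%N) => // [x y|i /andP[/andP[_ ij] _]]; [by rewrite geq_max => -> -> | exact: ltnW].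
by case: (p j); rewrite ?maxn0 // (maxn_idPr le).
Qed.

Lemma pv0 p : pv p 0 = 0%N.
Proof. by rewrite /pv big_geq. Qed.

Lemma pv_lt p j : (0 < j)%N -> (pv p j < j)%N.
Proof.
elim: j => // j IH _; rewrite pv_recr; case: (p j) => //.
by case: j IH => [|j] IH; rewrite ?pv0 // ltnS ltnW // IH.
Qed.

Lemma pv_top (p : pred nat) k : p k -> pv p k.+1 = k.
Proof. by move=> pk; rewrite pv_recr pk. Qed.

Lemma pv_mem (p : pred nat) j : p 0%N -> p (pv p j).
Proof.
move=> p0; elim: j => [|j IH]; first by rewrite pv0.
by rewrite pv_recr; case: ifP.
Qed.

Lemma pv_ge (p : pred nat) j i : (i < j)%N -> p i -> (i <= pv p j)%N.
Proof.
elim: j => // j IH; rewrite ltnS leq_eqVlt => /orP[/eqP ->|ij] pi.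
  by rewrite pv_recr pi.
rewrite pv_recr; case: ifP => _; [exact: ltnW | exact: IH].
Qed.

Lemma big_split_gen (T : Type) (idx : T) (op : Monoid.law idx) (F : nat -> nat -> T)
  (p q : pred nat) k N :
  (forall j, q j = (j < N.+2)%N && (if (j < k.+1)%N then p j else j == N.+1)) -> p k ->
  (k < N.+1)%N ->
  \big[op/idx]_(0 <= j < N.+2 | q j && (0 < j)%N) F j (j - pv q j)%N =
  op (\big[op/idx]_(0 <= j < k.+1 | p j && (0 < j)%N) F j (j - pv p j)%N)
     (F N.+1 (N.+1 - k)%N).
Proof.
move=> Hq pk kN.
have kN2 : (k.+1 <= N.+2)%N by apply: leqW.
rewrite (@big_cat_nat _ _ _ k.+1) //=; congr (op _ _).
  rewrite big_nat_cond [RHS]big_nat_cond; apply: eq_big => [j|j /andP[/andP[_ jk] _]].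
    case: (ltnP j k.+1) => jk /=; last by [].
    by rewrite Hq jk (leq_trans jk kN2).
  congr (F _ (_ - _)%N); apply: pv_eq => i ij.
  by rewrite Hq (ltn_trans ij jk) (ltn_trans ij (leq_trans jk kN2)).
rewrite (@big_cat_nat _ _ _ N.+1) //=.
rewrite big_nat_cond big1 ?Monoid.mul1m; last first.
  move=> j /andP[/andP[kj jN] /andP[qj _]].
  by rewrite Hq (ltnNge j k.+1) kj /= (ltn_eqF jN) andbF in qj.
rewrite big_mkcond big_nat1 Hq ltnSn ltnNge kN /= eqxx /=.
congr (F _ (_ - _)%N).
rewrite (@pv_eq q (fun i => p i && (i < k.+1)%N)); last first.
  move=> i iN; rewrite Hq (leqW iN) /=.
  by case: (ltnP i k.+1) => ik; rewrite ?andbT ?andbF // (ltn_eqF iN).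
by rewrite /pv max_restr // -/(pv p k.+1) pv_top.
Qed.

Definition ext m n (c : pred nat) (B : {set 'I_m}) : {set 'I_n} :=
  [set i : 'I_n | if (i < m)%N then memn B i else c i].
Definition restr n m (A : {set 'I_n}) : {set 'I_m} := [set j : 'I_m | memn A j].

Lemma memn_ext m n c (B : {set 'I_m}) j :
  memn (ext n c B) j = (j < n)%N && (if (j < m)%N then memn B j else c j).
Proof.
case: (ltnP j n) => jn /=.
  by have := memnE (ext n c B) (Ordinal jn); rewrite inE /= => ->.
by apply/negbTE/negP => /memn_lt; rewrite ltnNge jn.
Qed.

Lemma memn_restr n m (A : {set 'I_n}) j :
  memn (restr m A) j = (j < m)%N && memn A j.
Proof.
case: (ltnP j m) => jm /=.
  by have := memnE (restr m A) (Ordinal jm); rewrite inE /= => ->.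
by apply/negbTE/negP => /memn_lt; rewrite ltnNge jm.
Qed.

Lemma sum_ext (R : realType) m n (c : pred nat) (F : {set 'I_n} -> R) : (m <= n)%N ->
  \sum_(A : {set 'I_n} | [forall i : 'I_n, (m <= i)%N ==> ((i \in A) == c i)]) F A =
  \sum_(B : {set 'I_m}) F (ext n c B).
Proof.
move=> mn; rewrite (reindex_onto (ext n c) (restr m)) /=.
  apply: eq_bigl => B; apply/andP; split.
    apply/forallP => i; apply/implyP => mi.
    by rewrite inE ltnNge mi.
  apply/eqP/setP => j; rewrite inE memn_ext ltn_ord (leq_trans (ltn_ord j) mn) /=.
  by rewrite memnE.
move=> A /forallP HA; apply/setP => i; rewrite inE.
case: ifP => im; first by rewrite memn_restr im memnE.
by have := HA i; rewrite leqNgt im /= => /eqP ->.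
Qed.

Section Weights.
Variables (R : realType) (K : nat -> R) (beta h : R) (om : nat -> R).

Definition Wp (p : pred nat) (n : nat) : R :=
  \prod_(0 <= j < n | p j && (0 < j)%N) (K (j - pv p j)%N * expR (beta * om j + h)).

Lemma pin_weightE N (A : {set 'I_N.+1}) :
  pin_weight K beta h om A = if memn A 0 && memn A N then Wp (memn A) N.+1 else 0.
Proof.
rewrite /pin_weight -(memnE A ord0) -(memnE A ord_max) /=.
case: ifP => // _; rewrite /Wp big_mkord; apply: eq_big => [i|i _].
  by rewrite memnE.
by rewrite prev_ptE // ltnW.
Qed.

Definition Y n (phi : nat -> R) : R :=
  \sum_(A : {set 'I_n.+1}) pin_weight K beta h om A * phi (max_gap A).


Lemma Wp_split (p q : pred nat) k N :
  (forall j, q j = (j < N.+2)%N && (if (j < k.+1)%N then p j else j == N.+1)) -> p k ->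
  (k < N.+1)%N ->
  Wp q N.+2 = Wp p k.+1 * (K (N.+1 - k)%N * expR (beta * om N.+1 + h)).
Proof. exact: (@big_split_gen R 1 *%R (fun j l => K l * expR (beta * om j + h))). Qed.

Lemma MG_split (p q : pred nat) k N :
  (forall j, q j = (j < N.+2)%N && (if (j < k.+1)%N then p j else j == N.+1)) -> p k ->
  (k < N.+1)%N ->
  MG q N.+2 = maxn (MG p k.+1) (N.+1 - k)%N.
Proof. exact: (@big_split_gen nat 0%N maxn (fun j l => l)). Qed.

Lemma tail_char N (A : {set 'I_N.+2}) k : memn A 0 -> memn A N.+1 -> (k < N.+1)%N ->
  ([forall i : 'I_N.+2, (k.+1 <= i)%N ==> ((i \in A) == ((i:nat) == N.+1))] && memn A k)
  = (k == pv (memn A) N.+1).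
Proof.
move=> A0 AN kN; apply/idP/eqP.
  case/andP => /forallP Ht Ak.
  have Hp : forall i, (i < N.+1)%N -> memn A i = memn A i && (i < k.+1)%N.
    move=> i iN; case: (ltnP i k.+1) => ik; rewrite ?andbT ?andbF //.
    have := Ht (Ordinal (leqW iN)); rewrite /= ik /= -memnE /= (ltn_eqF iN).
    by move/eqP.
  by rewrite (@pv_eq _ (fun i => memn A i && (i < k.+1)%N) N.+1 Hp) /pv max_restr // -/(pv _ k.+1) pv_top.
move=> ->; apply/andP; split; last exact: pv_mem.
apply/forallP => i; apply/implyP => ki.
case: (ltnP i N.+1) => iN.
  rewrite (ltn_eqF iN) eqbF_neg; apply/negP => iA.
  rewrite -memnE in iA.
  by have := pv_ge iN iA; rewrite leqNgt ki.
have iE : (i:nat) = N.+1 by apply/eqP; rewrite eqn_leq iN -ltnS ltn_ord.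
by rewrite -memnE iE eqxx AN.
Qed.

Lemma Y_rec N phi : Y N.+1 phi = \sum_(k < N.+1)
   Y k (fun m => phi (maxn m (N.+1 - k)%N)) * (K (N.+1 - k)%N * expR (beta * om N.+1 + h)).
Proof.
rewrite /Y.
transitivity (\sum_(A : {set 'I_N.+2}) \sum_(k < N.+1)
  (if [forall i : 'I_N.+2, (k.+1 <= i)%N ==> ((i \in A) == ((i:nat) == N.+1))] && memn A k
   then pin_weight K beta h om A * phi (max_gap A) else 0)).
  apply: eq_bigr => A _.
  case: (boolP (memn A 0 && memn A N.+1)) => H; last first.
    by rewrite pin_weightE (negbTE H) mul0r big1 // => k _; case: ifP.
  case/andP: H => A0 AN.
  have k0lt : (pv (memn A) N.+1 < N.+1)%N by apply: pv_lt.
  rewrite (bigD1 (Ordinal k0lt)) //= tail_char // eqxx big1 ?addr0 // => k kk0.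
  rewrite tail_char // ?ltn_ord //.
  rewrite ifN //; apply: contra kk0 => /eqP kE; apply/eqP; exact: val_inj.
rewrite exchange_big /=; apply: eq_bigr => k _.
rewrite big_distrl /=.
transitivity (\sum_(A : {set 'I_N.+2} |
    [forall i : 'I_N.+2, (k.+1 <= i)%N ==> ((i \in A) == ((fun j : nat => j == N.+1) i))])
  (if memn A k then pin_weight K beta h om A * phi (max_gap A) else 0)).
  by rewrite [RHS]big_mkcond; apply: eq_bigr => A _; case: [forall _, _].
rewrite (@sum_ext R k.+1 N.+2 (fun j => j == N.+1)); last by rewrite ltnS ltnW.
apply: eq_bigr => B _.
have Hq := memn_ext N.+2 (fun j : nat => j == N.+1) B.
rewrite memn_ext /= ltnSn (leq_trans (ltn_ord k)) //.
case: (boolP (memn B k)) => Bk /=; last by rewrite !pin_weightE (negbTE Bk) andbF /= !mul0r.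
rewrite !pin_weightE !max_gapE Bk andbT !memn_ext /= ltnSn ltnNge (ltn_ord k) /= eqxx andbT.
case: (memn B 0); last by rewrite !mul0r.
rewrite (Wp_split Hq Bk (ltn_ord k)) (MG_split Hq Bk (ltn_ord k)).
by rewrite mulrAC.
Qed.

End Weights.

Section Bound.
Variables (R : realType) (K : nat -> R) (beta h : R) (om : nat -> R).
Hypothesis HK0 : forall n, 0 <= K n.
Hypothesis HK1 : 0 < K 1%N.

Let e j := expR (beta * om j + h).
Definition Zf n := Y K beta h om n (fun _ => 1).
Definition Gf (c : R) n := Y K beta h om n (fun m => if c < m%:R then 1 else 0).

Lemma w_ge0 N (A : {set 'I_N.+1}) : 0 <= pin_weight K beta h om A.
Proof.
rewrite pin_weightE; case: ifP => // _; apply: prodr_ge0 => j _.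
by apply: mulr_ge0 => //; apply: expR_ge0.
Qed.

Lemma Zf_ge0 n : 0 <= Zf n.
Proof. by apply: sumr_ge0 => A _; rewrite mulr1 w_ge0. Qed.

Lemma Gf_ge0 c n : 0 <= Gf c n.
Proof. by apply: sumr_ge0 => A _; apply: mulr_ge0; rewrite ?w_ge0 //; case: ifP. Qed.

Lemma Zf_rec n : Zf n.+1 = \sum_(k < n.+1) Zf k * (K (n.+1 - k)%N * e n.+1).
Proof. by rewrite /Zf Y_rec. Qed.

Lemma phi_max (c : R) m l :
  (if c < (maxn m l)%:R then 1 else 0 : R) =
  if c < l%:R then 1 else if c < m%:R then 1 else 0.
Proof.
case: (leqP m l) => ml.
  case: ifP => // /negbT; rewrite -leNgt => lc.
  rewrite ifF //; apply/negbTE; rewrite -leNgt; apply: le_trans lc; by rewrite ler_nat.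
case: ifP => cm; first by case: ifP.
  rewrite ifF //; apply/negbTE; rewrite -leNgt.
apply: le_trans (_ : (m%:R : R) <= c); first by rewrite ler_nat ltnW.
by rewrite leNgt cm.
Qed.

Lemma Gf_rec c n : Gf c n.+1 = \sum_(k < n.+1)
  (if c < (n.+1 - k)%N%:R then Zf k else Gf c k) * (K (n.+1 - k)%N * e n.+1).
Proof.
rewrite /Gf Y_rec; apply: eq_bigr => k _; congr (_ * _); rewrite /Y.
by case: ifP => cl; apply: eq_bigr => A _; rewrite phi_max cl.
Qed.

Lemma max_gap0 (A : {set 'I_1}) : max_gap A = 0%N.
Proof. by rewrite /max_gap big_pred0 // => j; rewrite (ord1 j) andbF. Qed.

Lemma Gf0 c : 0 <= c -> Gf c 0 = 0.
Proof.
move=> c0; rewrite /Gf /Y big1 // => A _; rewrite max_gap0 ifF ?mulr0 //.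
by apply/negbTE; rewrite -leNgt.
Qed.

Lemma Zf0 : 0 < Zf 0.
Proof.
rewrite /Zf /Y (bigD1 [set: 'I_1]%SET) //=.
have -> : pin_weight K beta h om [set: 'I_1]%SET = 1.
  rewrite /pin_weight !finset.in_setT /= big_pred0 // => j.
  by rewrite (ord1 j) andbF.
have : 0 <= \sum_(i | i != [set: 'I_1]%SET) pin_weight K beta h om i * 1.
  by apply: sumr_ge0 => A _; rewrite mulr1 w_ge0.
lra.
Qed.

Lemma Z_step n : Zf n * (K 1%N * e n.+1) <= Zf n.+1.
Proof.
rewrite Zf_rec (bigD1 ord_max) //= subSnn lerDl.
apply: sumr_ge0 => k _; apply: mulr_ge0; first exact: Zf_ge0.
by apply: mulr_ge0 => //; apply: expR_ge0.
Qed.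

Lemma Zf_pos n : 0 < Zf n.
Proof.
elim: n => [|n IH]; first exact: Zf0.
apply: lt_le_trans (Z_step n); rewrite mulr_gt0 // mulr_gt0 //; exact: expR_gt0.
Qed.

Definition dt (c : R) b := \sum_(0 <= a < b | c < (b - a)%N%:R)
  Zf a * K (b - a)%N / (K 1%N * Zf b.-1).
Definition Df c n := \sum_(0 <= b < n) dt c b.+1.

Lemma dt_ge0 c b : 0 <= dt c b.
Proof.
apply: sumr_ge0 => a _; apply: divr_ge0; first by apply: mulr_ge0 => //; exact: Zf_ge0.
by apply: mulr_ge0; [exact: ltW | exact: Zf_ge0].
Qed.

Lemma Df_mono c k n : (k <= n)%N -> Df c k <= Df c n.
Proof.
move=> kn; rewrite /Df [X in _ <= X](@big_cat_nat _ _ _ k) //= lerDl.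
by apply: sumr_ge0 => b _; exact: dt_ge0.
Qed.

Lemma Df_ge0 c n : 0 <= Df c n.
Proof. by apply: sumr_ge0 => b _; exact: dt_ge0. Qed.

Lemma first_part c n :
  \sum_(k < n.+1) (if c < (n.+1 - k)%N%:R then Zf k * (K (n.+1 - k)%N * e n.+1) else 0)
  <= dt c n.+1 * Zf n.+1.
Proof.
apply: le_trans (_ : _ <= dt c n.+1 * (Zf n * (K 1%N * e n.+1))) _; last first.
  by apply: ler_wpM2l; [exact: dt_ge0 | exact: Z_step].
rewrite /dt big_mkord mulr_suml [X in _ <= X]big_mkcond /=; apply: ler_sum => a _.
case: ifP => // _; rewrite le_eqVlt; apply/orP; left; apply/eqP.
have := Zf_pos n; have := Zf_pos a; rewrite /= => Za Zn.
by field; rewrite !gt_eqF.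
Qed.

Lemma Gf_bound c : 0 <= c -> forall n, Gf c n <= Df c n * Zf n.
Proof.
move=> c0.
suff H : forall n k, (k <= n)%N -> Gf c k <= Df c k * Zf k by move=> m; exact: (H m m (leqnn m)).
elim=> [|n IH] k.
  rewrite leqn0 => /eqP ->; rewrite Gf0 //; apply: mulr_ge0; [exact: Df_ge0 | exact: ltW (Zf_pos 0)].
rewrite leq_eqVlt => /orP[/eqP ->|]; last exact: IH.
rewrite Gf_rec.
apply: le_trans (_ : _ <= \sum_(k < n.+1)
  ((if c < (n.+1 - k)%N%:R then Zf k * (K (n.+1 - k)%N * e n.+1) else 0)
   + Df c n * (Zf k * (K (n.+1 - k)%N * e n.+1)))) _.
  apply: ler_sum => j _.
  have f0 : 0 <= K (n.+1 - j)%N * e n.+1 by apply: mulr_ge0 => //; exact: expR_ge0.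
  have := Zf_ge0 j; have := Df_ge0 c n => D0 Z0.
  case: ifP => _.
    by rewrite lerDl; apply: mulr_ge0 => //; apply: mulr_ge0.
  rewrite add0r [X in _ <= X]mulrA; apply: ler_wpM2r => //.
  have jn : (j <= n)%N by rewrite -ltnS; exact: ltn_ord.
  apply: le_trans (IH j jn) _.
  by apply: ler_wpM2r => //; apply: Df_mono.
rewrite big_split /= -mulr_sumr -Zf_rec.
rewrite /Df big_nat_recr //= -/(Df c n) mulrDl addrC lerD2l.
exact: first_part.
Qed.

Lemma pin_ZE N : pin_Z K beta h om N = Zf N.
Proof. by rewrite /Zf /Y; apply: eq_bigr => A _; rewrite mulr1. Qed.

Hypothesis HKle1 : forall n, K n <= 1.

Lemma final (F g : R) : 0 < F -> 0 < g ->
  (fun N : nat => ln (pin_Z K beta h om N) / N%:R) @ \oo --> F ->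
  exists N0 : nat, forall N, (N0 <= N)%N ->
    Df (g * N%:R) N <= expR (- (g * N%:R * F / 2)).
Proof.
move=> F0 g0 /fcvgrPdist_lt.
set eps := g * F / 8.
have e0 : 0 < eps by rewrite /eps; apply: divr_gt0 => //; apply: mulr_gt0.
move=> /(_ eps e0) [n0 _ Hn].
set n1 := maxn n0 1.
have Hn1 n : (n1 <= n)%N -> (F - eps) * n%:R < ln (Zf n) < (F + eps) * n%:R.
  move=> nn; have n0n : (n0 <= n)%N by apply: leq_trans nn; rewrite leq_maxl.
  have npos : (0 : R) < n%:R.
    by rewrite ltr0n; apply: leq_trans nn; rewrite leq_maxr.
  have := Hn n n0n; rewrite /= pin_ZE ltr_norml => /andP[h1 h2].
  have h3 : ln (Zf n) / n%:R < F + eps by lra.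
  have h4 : F - eps < ln (Zf n) / n%:R by lra.
  by rewrite ltr_pdivrMr // in h3; rewrite ltr_pdivlMr // in h4; rewrite h3 h4.
have Zup n : (n1 <= n)%N -> Zf n <= expR ((F + eps) * n%:R).
  move=> nn; rewrite -[Zf n]lnK ?posrE ?Zf_pos // ler_expR.
  by case/andP: (Hn1 n nn) => _ /ltW.
have Zlo n : (n1 <= n)%N -> expR ((F - eps) * n%:R) <= Zf n.
  move=> nn; rewrite -[Zf n]lnK ?posrE ?Zf_pos // ler_expR.
  by case/andP: (Hn1 n nn) => /ltW.
set M := 1 + \sum_(0 <= a < n1) Zf a.
have Ssum : 0 <= \sum_(0 <= a < n1) Zf a by apply: sumr_ge0 => a _; exact: Zf_ge0.
have M1 : 1 <= M by rewrite /M; lra.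
have Zall a : Zf a <= M * expR ((F + eps) * a%:R).
  case: (ltnP a n1) => an.
    have ea : 1 <= expR ((F + eps) * a%:R).
      have := expR_ge1Dx ((F + eps) * a%:R).
      have : 0 <= (F + eps) * a%:R by apply: mulr_ge0 => //; lra.
      lra.
    apply: le_trans (_ : _ <= M) _; last by rewrite -{1}[M]mulr1 ler_wpM2l //; lra.
    apply: le_trans (_ : _ <= \sum_(0 <= a < n1) Zf a) _; last by rewrite /M; lra.
    rewrite (@big_cat_nat _ _ _ a) //= ?(ltnW an) // [X in _ + X]big_ltn //.
    have : 0 <= \sum_(0 <= i < a) Zf i by apply: sumr_ge0 => i _; exact: Zf_ge0.
    have : 0 <= \sum_(a.+1 <= i < n1) Zf i by apply: sumr_ge0 => i _; exact: Zf_ge0.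
    lra.
  apply: le_trans (Zup a an) _; apply: ler_peMl => //; exact: expR_ge0.
set C0 := M * expR F / K 1%N.
have C00 : 0 < C0.
  rewrite /C0; apply: divr_gt0 => //; apply: mulr_gt0; [lra | exact: expR_gt0].
set d := g * F / 4.
have d0 : 0 < d by rewrite /d; apply: divr_gt0 => //; apply: mulr_gt0.
have x1 : 0 <= (n1.+1)%:R / g by apply: divr_ge0 => //; exact: ltW.
have x2 : 0 <= 27 * C0 / d ^+ 3.
  by apply: divr_ge0; [apply: mulr_ge0 => //; exact: ltW | apply: exprn_ge0; exact: ltW].
exists (maxn (maxn (Num.Def.archi_bound ((n1.+1)%:R / g)) (Num.Def.archi_bound (27 * C0 / d ^+ 3))) 1).
move=> N HN.
have HN1 : (n1.+1)%:R < g * N%:R.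
  have := archi_boundP x1; rewrite ltr_pdivrMr // => H.
  apply: lt_le_trans H _; rewrite mulrC; apply: ler_wpM2l; first exact: ltW.
  rewrite ler_nat.
  by apply: leq_trans HN; rewrite leq_max leq_max leqnn.
have HN2 : 27 * C0 < N%:R * d ^+ 3.
  have := archi_boundP x2; rewrite ltr_pdivrMr ?exprn_gt0 // => H.
  apply: lt_le_trans H _; apply: ler_wpM2r; first by rewrite exprn_ge0 ?ltW.
  rewrite ler_nat.
  by apply: leq_trans HN; rewrite leq_max leq_max leqnn orbT.
have N1 : (1 <= N)%N by apply: leq_trans HN; rewrite leq_maxr.
set E := expR (- (3 * d * N%:R)).
have E0 : 0 <= E by exact: expR_ge0.
have term b a : (b <= N)%N -> (a < b)%N -> g * N%:R < (b - a)%N%:R ->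
    Zf a * K (b - a)%N / (K 1%N * Zf b.-1) <= C0 * E.
  move=> bN ab gb.
  have b0 : (0 < b)%N by apply: leq_ltn_trans ab.
  have hb : (b%:R : R) = (b.-1)%:R + 1 by rewrite -{1}(prednK b0) mulrSr.
  have hba : ((b - a)%N%:R : R) = b%:R - a%:R by rewrite natrB // ltnW.
  have bn1 : (n1 <= b.-1)%N.
    have : ((n1.+1)%:R : R) < (b.-1)%:R + 1.
      rewrite -hb; apply: lt_trans HN1 _; apply: lt_le_trans gb _.
      by rewrite ler_nat leq_subr.
    by rewrite -natr1 ltrD2r ltr_nat => /ltnW.
  rewrite ler_pdivrMr; last by apply: mulr_gt0 => //; exact: Zf_pos.
  apply: le_trans (_ : _ <= M * expR ((F + eps) * a%:R)) _.
    by apply: le_trans (Zall a); rewrite ler_piMr ?Zf_ge0.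
  apply: le_trans (_ : _ <= C0 * E * (K 1%N * expR ((F - eps) * (b.-1)%:R))) _; last first.
    apply: ler_wpM2l; first by apply: mulr_ge0 => //; exact: ltW.
    by apply: ler_wpM2l; [exact: ltW | exact: Zlo].
  have -> : C0 * E * (K 1%N * expR ((F - eps) * (b.-1)%:R)) =
     M * (expR F * E * expR ((F - eps) * (b.-1)%:R)).
    by rewrite /C0; field; rewrite gt_eqF.
  rewrite /E -!expRD; apply: ler_wpM2l; first lra.
  rewrite ler_expR.
  have p1 : F * (g * N%:R) <= F * (b%:R - a%:R) by rewrite -hba; apply: ler_wpM2l; exact: ltW.
  have aN : (a%:R : R) + b%:R - 1 <= 2 * N%:R.
    have : (a%:R : R) < b%:R by rewrite ltr_nat.
    have : (b%:R : R) <= N%:R by rewrite ler_nat.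
    lra.
  have p2 : eps * (b%:R + a%:R - 1) <= eps * (2 * N%:R).
    by apply: ler_wpM2l; [exact: ltW | lra].
  move: p1 p2 hb; rewrite /eps /d; move: (b.-1)%:R (b%:R) (a%:R) (N%:R) => xb1 xb xa xN /=.
  move=> p1 p2 hb; rewrite hb in p1 p2; lra.
have dtb b : (0 < b)%N -> (b <= N)%N -> dt (g * N%:R) b <= N%:R * (C0 * E).
  move=> b0 bN; rewrite /dt big_mkcond /=.
  apply: le_trans (_ : _ <= \sum_(0 <= a < b) C0 * E) _.
    apply: ler_sum_nat => a /andP[_ ab]; case: ifP => gb; last by apply: mulr_ge0 => //; exact: ltW.
    exact: term.
  rewrite sumr_const_nat subn0 -(mulr_natr (C0 * E) b) [X in X <= _]mulrC; apply: ler_wpM2r; last by rewrite ler_nat.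
  by apply: mulr_ge0 => //; exact: ltW.
apply: le_trans (_ : _ <= \sum_(0 <= b < N) N%:R * (C0 * E)) _.
  by apply: ler_sum_nat => b /andP[_ bN]; apply: dtb.
rewrite sumr_const_nat subn0 -(mulr_natr (N%:R * (C0 * E)) N).
have -> : g * N%:R * F / 2 = 2 * d * N%:R by rewrite /d; field.
set y := d * N%:R / 3.
have y0 : 0 <= y by rewrite /y; apply: divr_ge0 => //; apply: mulr_ge0 => //; exact: ltW.
have ey : y <= expR y by have := expR_ge1Dx y; lra.
have Hy : y * y * y <= expR (d * N%:R).
  have -> : d * N%:R = y + y + y by rewrite /y; field.
  by rewrite !expRD; apply: ler_pM; [apply: mulr_ge0 | | apply: ler_pM | ].
have -> : - (2 * d * N%:R) = d * N%:R + - (3 * d * N%:R) by ring.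
rewrite expRD -/E.
have N0 : (0 : R) <= N%:R by [].
have H3 : N%:R * (C0 * E) * N%:R = (N%:R * N%:R * C0) * E by ring.
rewrite H3; apply: ler_wpM2r => //; apply: le_trans Hy.
have -> : y * y * y = N%:R * N%:R * (N%:R * d ^+ 3 / 27) by rewrite /y; field.
apply: ler_wpM2l; [exact: mulr_ge0 | lra].
Qed.

End Bound.

Theorem lemma5p1
  (R : realType)
  (* renewal increment law K(n) = P(eta_1 = n), n in {1,2,...} *)
  (K : nat -> R) (alpha CK : R)
  (hK0 : K 0%N = 0)
  (hKpos : forall n : nat, (0 < n)%N -> 0 < K n)
  (hKsum : (fun n : nat => \sum_(0 <= k < n) K k) @ \oo --> (1 : R))
  (halpha : 0 < alpha) (hCK : 0 < CK)
  (hKasy : (fun n : nat => K n * (n%:R `^ (1 + alpha))) @ \oo --> CK)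
  (* disorder (omega_n)_{n >= 1}, i.i.d. with law P *)
  (d : measure_display) (T : measurableType d) (P : probability T R)
  (omega : nat -> T -> R)
  (hmeas : forall n : nat, measurable_fun [set: T] (omega n))
  (hindep : forall (I : seq nat) (B : nat -> set R),
      uniq I -> (forall i, i \in I -> (0 < i)%N) ->
      (forall i, measurable (B i)) ->
      P (\bigcap_(i in [set i | i \in I]) (omega i @^-1` B i))
      = (\prod_(i <- I) P (omega i @^-1` B i))%E)
  (hident : forall (n : nat) (B : set R), (0 < n)%N -> measurable B ->
      P (omega n @^-1` B) = P (omega 1%N @^-1` B))
  (hexpmom : forall s : R,
      P.-integrable [set: T] (fun t => (expR (s * omega 1%N t))%:E))
  (hmean : (\int[P]_t (omega 1%N t)%:E = 0)%E)
  (hvar : (\int[P]_t ((omega 1%N t) ^+ 2)%:E = 1)%E)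
  (* parameters and free energy *)
  (beta h F : R) (hbeta : 0 <= beta)
  (hF : {ae P, forall t,
      (fun N : nat => ln (pin_Z K beta h (fun n => omega n t) N) / N%:R)
        @ \oo --> F})
  (hFpos : 0 < F) :
  forall gamma : R, 0 < gamma -> gamma <= F ->
  {ae P, forall t, exists N0 : nat, forall N : nat, (N0 <= N)%N ->
     @pin_prob R K beta h (fun n => omega n t) N
       (fun A => gamma * N%:R < (max_gap A)%:R)
     <= expR (- (gamma * N%:R * F / 2))}.

Proof.
move=> gamma g0 gF.
have HK0 : forall n, 0 <= K n by case=> [|n]; [rewrite hK0 | apply: ltW; apply: hKpos].
have HK1 : 0 < K 1%N by apply: hKpos.
have HKle1 : forall n, K n <= 1.
  move=> n.
  pose u := fun n : nat => \sum_(0 <= k < n) K k.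
  have hom : {homo u : p q / (p <= q)%N >-> p <= q}.
    move=> p q pq; rewrite /u [X in _ <= X](@big_cat_nat _ _ _ p) //= lerDl.
    by apply: sumr_ge0 => i _; exact: HK0.
  have := nondecreasing_cvgn_le hom (cvgP _ hKsum) n.+1.
  rewrite (cvg_lim _ hKsum) // /u big_nat_recr //=.
  have : 0 <= \sum_(0 <= k < n) K k by apply: sumr_ge0 => i _; exact: HK0.
  lra.
apply: filterS hF => t conv.
have [N0 HN0] := final HK0 HK1 HKle1 hFpos g0 conv.
exists N0 => N HN.
rewrite /pin_prob.
have -> : \sum_(A : {set 'I_N.+1} | gamma * N%:R < (max_gap A)%:R) pin_weight K beta h (fun n => omega n t) A
   = Gf K beta h (fun n => omega n t) (gamma * N%:R) N.
  by rewrite /Gf /Y big_mkcond; apply: eq_bigr => A _; case: ifP; rewrite ?mulr1 ?mulr0.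
have Zp := Zf_pos beta h (fun n => omega n t) HK0 HK1 N.
rewrite pin_ZE ler_pdivrMr //.
apply: le_trans (Gf_bound beta h (fun n => omega n t) HK0 HK1 _ N) _.
  by apply: mulr_ge0 => //; exact: ltW.
apply: ler_wpM2r; [exact: ltW | exact: HN0].
Qed.
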